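(* Let $k\geq 1$ be an odd integer and let $G$ be a finite simple graph that has an almost perfect integer $k$-matching. Then for every $S\subseteq V(G)$, $$\mathrm{odd}(G-S)+k\cdot i(G-S)\leq k|S|+1 .$$
   Context: All graphs are finite, simple and undirected. For $v\in V(G)$, $\Gamma(v)$ denotes the set of edges incident with $v$. For a positive integer $k$, an integer $k$-matching of $G$ is a function $h:E(G)\to\{0,1,\dots,k\}$ such that $\sum_{e\in\Gamma(v)}h(e)\leq k$ for every $v\in V(G)$. It is almost perfect if there is exactly one vertex $v'$ with $\sum_{e\in\Gamma(v')}h(e)=k-1$ and $\sum_{e\in\Gamma(v)}h(e)=k$ for every other vertex $v$. For a graph $H$, $i(H)$ is the number of isolated vertices (vertices of degree $0$) of $H$, and $\mathrm{odd}(H)$ is the number of connected components of $H$ that have an odd number of vertices and at least three vertices. *)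

(* Defs.v *)
From mathcomp Require Import all_boot.
Set Implicit Arguments. Unset Strict Implicit. Unset Printing Implicit Defensive.

Definition simple_graph (T : finType) (e : rel T) : Prop :=
  symmetric e /\ irreflexive e.

Definition edges (T : finType) (e : rel T) : {set {set T}} :=
  [set [set x; y] | x in T, y in T & e x y].

Definition hdeg (T : finType) (e : rel T) (h : {set T} -> nat) (v : T) : nat :=
  \sum_(f in edges e | v \in f) h f.

(* integer k-matching: h : E(G) -> {0..k}, sum at each vertex <= k
   (h is a function on all 2-sets, only its values on edges matter). *)
Definition int_matching (T : finType) (e : rel T) (k : nat) (h : {set T} -> nat) : Prop :=
  (forall f, f \in edges e -> h f <= k) /\ (forall v, hdeg e h v <= k).

Definition almost_perfect_int_matching (T : finType) (e : rel T) (k : nat)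
    (h : {set T} -> nat) : Prop :=
  int_matching e k h /\
  exists v', hdeg e h v' = k.-1 /\ (forall v, v != v' -> hdeg e h v = k).

Definition del_rel (T : finType) (e : rel T) (S : {set T}) : rel T :=
  [rel x y | [&& e x y, x \notin S & y \notin S]].

Definition compo (T : finType) (e : rel T) (S : {set T}) (x : T) : {set T} :=
  [set y in ~: S | connect (del_rel e S) x y].

Definition components (T : finType) (e : rel T) (S : {set T}) : {set {set T}} :=
  [set compo e S x | x in ~: S].

Definition iso_count (T : finType) (e : rel T) (S : {set T}) : nat :=
  #|[set x in ~: S | [forall y, ~~ del_rel e S x y]]|.

Definition odd_count (T : finType) (e : rel T) (S : {set T}) : nat :=
  #|[set C in components e S | odd #|C| && (3 <= #|C|)]|.

(* Main.v *)
Require Import Defs.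
From mathcomp Require Import all_boot zify.
Set Implicit Arguments. Unset Strict Implicit. Unset Printing Implicit Defensive.

Lemma hdegE (T : finType) (e : rel T) (h : {set T} -> nat) v :
  simple_graph e -> hdeg e h v = \sum_(y | e v y) h [set v; y].
Proof.
move=> [sym irr]; rewrite /hdeg.
transitivity (\sum_(f in [set f in edges e | v \in f]) h f).
  by apply: eq_bigl => f; rewrite inE.
rewrite (_ : [set f in edges e | v \in f] = (fun y => [set v; y]) @: [set y | e v y]).
  rewrite big_imset /=; first by apply: eq_bigl => y; rewrite inE.
  move=> y1 y2; rewrite !inE => e1 e2 /setP /(_ y1).
  rewrite !inE eqxx orbT /= => /esym /orP[/eqP E|/eqP //].
  by rewrite E irr in e1.
apply/setP => f; rewrite !inE; apply/andP/imsetP.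
- case=> /imset2P [x y _]; rewrite inE => /andP[_ exy] ->; rewrite !inE.
  case/orP=> /eqP E; subst.
    by exists y; rewrite ?inE.
  by exists x; [rewrite inE sym | rewrite setUC].
- case=> y; rewrite inE => evy ->; split; last by rewrite !inE eqxx.
  by apply/imset2P; exists v y; rewrite ?inE.
Qed.

Lemma del_sym (T : finType) (e : rel T) (S : {set T}) : symmetric e -> symmetric (del_rel e S).
Proof. by move=> sym x y; rewrite /del_rel /= sym; case: (x \in S); case: (y \in S). Qed.

Lemma compo_eq (T : finType) (e : rel T) (S : {set T}) x y : symmetric e ->
  y \in compo e S x -> compo e S y = compo e S x.
Proof.
move=> sym; rewrite inE => /andP[_ cxy]; apply/setP => z; rewrite !inE.
have cs := sym_connect_sym (del_sym S sym).
congr (_ && _); apply/idP/idP => H.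
  exact: connect_trans cxy H.
by apply: connect_trans H; rewrite cs.
Qed.

Lemma comp_mem (T : finType) (e : rel T) (S : {set T}) C z : symmetric e ->
  C \in components e S -> z \in C -> C = compo e S z.
Proof.
by move=> sym /imsetP[x _ ->] zC; rewrite (compo_eq sym zC).
Qed.

Lemma compo_self (T : finType) (e : rel T) (S : {set T}) x : x \notin S -> x \in compo e S x.
Proof. by move=> xS; rewrite !inE xS connect0. Qed.

Lemma triv_comp (T : finType) (e : rel T) (S : {set T}) : symmetric e -> trivIset (components e S).
Proof.
move=> sym; apply/trivIsetP => A B HA HB neq.
apply/pred0P => z /=; apply/negbTE/negP => /andP[zA zB].
by move: neq; rewrite (comp_mem sym HA zA) (comp_mem sym HB zB) eqxx.
Qed.

Lemma cover_comp (T : finType) (e : rel T) (S : {set T}) : cover (components e S) = ~: S.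
Proof.
apply/setP => z; apply/bigcupP/idP.
  by case=> C /imsetP[x _ ->]; rewrite !inE => /andP[].
move=> zS; exists (compo e S z); first by apply/imsetP; exists z.
by apply: compo_self; rewrite inE in zS.
Qed.

Lemma compo_clos (T : finType) (e : rel T) (S : {set T}) x y z :
  y \in compo e S x -> z \notin S -> e y z -> z \in compo e S x.
Proof.
rewrite !inE => /andP[yS cxy] zS eyz; rewrite zS /=.
apply: connect_trans cxy (connect1 _); by rewrite /del_rel /= eyz yS zS.
Qed.

Lemma compo_iso (T : finType) (e : rel T) (S : {set T}) x :
  x \notin S -> (forall y, ~~ del_rel e S x y) -> compo e S x = [set x].
Proof.
move=> xS iso; apply/setP => z; rewrite !inE; apply/idP/idP.
  case/andP=> _ /connectP[[|y p] /=]; first by move=> _ ->.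
  by case/andP=> H; move: (iso y); rewrite H.
by move/eqP->; rewrite xS connect0.
Qed.

Lemma sum_sub (T : finType) (P Q : pred T) (F : T -> nat) :
  \sum_(i | P i && Q i) F i <= \sum_(i | P i) F i.
Proof. by rewrite (bigID Q P) /= leq_addr. Qed.

Lemma even_double (T : finType) (e : rel T) (C : {set T}) (h : {set T} -> nat) :
  symmetric e -> irreflexive e ->
  ~~ odd (\sum_(y in C) \sum_(z in C | e y z) h [set y; z]).
Proof.
move=> sym irr.
rewrite (eq_bigr (fun y => \sum_(z in C | e y z && (enum_rank z < enum_rank y)) h [set y; z]
   + \sum_(z in C | e y z && (enum_rank y < enum_rank z)) h [set y; z])); last first.
  move=> y _; rewrite (bigID (fun z => enum_rank z < enum_rank y)) /=.
  congr (_ + _); first by apply: eq_bigl => z; rewrite andbA.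
  apply: eq_bigl => z; rewrite -andbA; congr (_ && _).
  case eyz: (e y z) => //=.
  have nyz : y != z by apply/eqP => E; rewrite E irr in eyz.
  case: ltngtP => // /ord_inj /enum_rank_inj E.
  by rewrite E eqxx in nyz.
rewrite big_split /=.
rewrite [X in _ + X](exchange_big_dep (mem C)) /=; last by move=> ? ? _ /andP[].
rewrite [X in _ + X](eq_bigr (fun z => \sum_(y in C | e z y && (enum_rank y < enum_rank z)) h [set z; y])).
  by rewrite addnn odd_double.
move=> z zC; apply: eq_big => [y|y _]; last by rewrite setUC.
by rewrite zC sym.
Qed.

Theorem lemma3p6 (T : finType) (e : rel T) (k : nat) :
  simple_graph e -> odd k ->
  (exists h : {set T} -> nat, almost_perfect_int_matching e k h) ->
  forall S : {set T},
    odd_count e S + k * iso_count e S <= k * #|S| + 1.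
Proof.
move=> [sym irr] oddk [h [[hk hle] [v' [hv' hv]]]] S.
have sg : simple_graph e by [].
have k1 : 0 < k by move: oddk; case: (k).
have hdk : forall y, hdeg e h y + (y == v') = k.
  move=> y; case: eqP => [->|/eqP ne]; first by rewrite hv' addn1 prednK.
  by rewrite hv // addn0.
pose out := fun y => \sum_(z in S | e y z) h [set y; z].
pose I := [set x in ~: S | [forall y, ~~ del_rel e S x y]].
pose O := [set C in components e S | odd #|C| && (3 <= #|C|)].
have -> : iso_count e S = #|I| by [].
have -> : odd_count e S = #|O| by [].
have stepA : \sum_(y in ~: S) out y <= k * #|S|.
  apply: (@leq_trans (\sum_(v in S) hdeg e h v)); last first.
    by rewrite mulnC -sum_nat_const; apply: leq_sum => v _; exact: hle.
  apply: (@leq_trans (\sum_(v in S) \sum_(y in ~: S | e v y) h [set v; y])); last first.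
    apply: leq_sum => v _; rewrite hdegE //.
    rewrite (eq_bigl (fun y => e v y && (y \in ~: S))); first exact: sum_sub.
    by move=> y; rewrite andbC.
  rewrite [X in _ <= X](exchange_big_dep (mem (~: S))) /=; last by move=> ? ? _ /andP[].
  apply: eq_leq; apply: eq_bigr => y yS; rewrite /out.
  apply: eq_big => [v|v _]; last by rewrite setUC.
  by rewrite yS sym.
have stepB : \sum_(y in I) out y + \sum_(C in O) \sum_(y in C) out y <= \sum_(y in ~: S) out y.
  have IS : I \subset ~: S by apply/subsetP => x; rewrite inE => /andP[].
  rewrite [X in _ <= X](big_setID I) /= (setIidPr IS) leq_add2l.
  have trO : trivIset O.
    by apply: (trivIsetS _ (triv_comp S sym)); apply/subsetP => C; rewrite inE => /andP[].
  rewrite -big_trivIset //.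
  have sub : cover O \subset ~: S :\: I.
    apply/subsetP => y /bigcupP[C]; rewrite inE => /andP[Cc /andP[_ C3]] yC.
    have Cy := comp_mem sym Cc yC.
    have yS : y \in ~: S by rewrite -(cover_comp e S); apply/bigcupP; exists C.
    rewrite inE yS andbT; apply/negP => yI.
    move: yI; rewrite inE => /andP[_ /forallP iso].
    rewrite inE in yS.
    by move: C3; rewrite Cy (compo_iso yS iso) cards1.
  by rewrite [X in _ <= X](big_setID (cover O)) /= (setIidPr sub) leq_addr.
have stepC : k * #|I| <= \sum_(y in I) out y + (v' \in I).
  have e1 : forall y, y \in I -> hdeg e h y = out y.
    move=> y; rewrite inE => /andP[yS /forallP iso].
    rewrite inE in yS.
    rewrite hdegE // /out (bigID (fun z => z \in S)) /= [X in _ + X]big1 ?addn0.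
      by apply: eq_bigl => z; rewrite andbC.
    by move=> z /andP[ez zS]; move: (iso z); rewrite /del_rel /= ez yS zS.
  rewrite mulnC -sum_nat_const.
  apply: (@leq_trans (\sum_(y in I) (out y + (y == v')))).
    by apply: leq_sum => y yI; rewrite -(e1 _ yI) hdk.
  rewrite big_split /= leq_add2l.
  case vI: (v' \in I).
    by rewrite (bigD1 v') //= eqxx big1 //= => y /andP[_ /negbTE ->].
  by rewrite big1 // => y yI; case: eqP yI => // ->; rewrite vI.
have stepD : #|O| <= \sum_(C in O) \sum_(y in C) out y + \sum_(C in O) (v' \in C).
  rewrite -big_split /= -sum1_card; apply: leq_sum => C CO.
  case vC: (v' \in C); first by rewrite addn1.
  rewrite addn0.
  move: CO; rewrite inE => /andP[Cc /andP[oC _]].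
  have hsum : \sum_(y in C) hdeg e h y = #|C| * k.
    rewrite -sum_nat_const; apply: eq_bigr => y yC; rewrite hv //.
    by apply/eqP => E; rewrite E vC in yC.
  have hsplit : \sum_(y in C) hdeg e h y
      = \sum_(y in C) \sum_(z in C | e y z) h [set y; z] + \sum_(y in C) out y.
    rewrite -big_split /=; apply: eq_bigr => y yC.
    rewrite hdegE // (bigID (fun z => z \in S)) /= addnC /out; congr (_ + _).
      have Cy := comp_mem sym Cc yC.
      have yS : y \in ~: S by rewrite -(cover_comp e S); apply/bigcupP; exists C.
      rewrite inE in yS.
      apply: eq_bigl => z /=; rewrite andbC; case ez: (e y z); last by rewrite !andbF.
      rewrite !andbT; apply/idP/idP => [zS|zC].
        by rewrite Cy; apply: compo_clos (compo_self _ yS) zS ez.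
      by move: zC; rewrite Cy !inE => /andP[].
    by apply: eq_bigl => z; rewrite andbC.
  have evA := even_double C h sym irr.
  have : odd (#|C| * k) by rewrite oddM oC oddk.
  rewrite -hsum hsplit oddD (negbTE evA) /=.
  exact: odd_gt0.
have stepE : (v' \in I) + \sum_(C in O) (v' \in C) <= 1.
  case: (pickP (fun C => (C \in O) && (v' \in C))) => [C0 /andP[C0O vC0] | none]; last first.
    rewrite big1 ?addn0; first by case: (v' \in I).
    by move=> C CO; move: (none C); rewrite /= CO /= => ->.
  rewrite (bigD1 C0) //= vC0 big1 ?addn0.
    case vI: (v' \in I) => //; exfalso.
    move: vI C0O; rewrite !inE => /andP[vS /forallP iso] /andP[Cc /andP[_ C3]].
    by move: C3; rewrite (comp_mem sym Cc vC0) (compo_iso vS iso) cards1.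
  move=> C /andP[CO neq]; case vC: (v' \in C) => //.
  move: CO C0O neq; rewrite !inE => /andP[Cc _] /andP[C0c _].
  by rewrite (comp_mem sym Cc vC) (comp_mem sym C0c vC0) eqxx.
move: stepA stepB stepC stepD stepE.
set a := \sum_(y in ~: S) out y.
set b := \sum_(y in I) out y.
set c := \sum_(C in O) \sum_(y in C) out y.
set d := \sum_(C in O) (v' \in C).
set i := k * #|I|.
set s := k * #|S|.
set u := nat_of_bool (v' \in I).
move=> HA HB HC HD HE.
apply: (leq_trans (leq_add HD HC)).
apply: (@leq_trans (b + c + (u + d))); first by apply: eq_leq; lia.
by apply: leq_add; [exact: leq_trans HB HA | exact: HE].
Qed.
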